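(* Let $1\le k<n$, let $w=(y_1,\dots,y_{k-r},\overline{z_r},\dots,\overline{z_1},v_1,\dots,v_{n-k-1},\widehat{v_{n-k}})\in W^{OG(k,2n)}$ and $\lambda=\mathrm{Inv}(w)$. Then for $1\le i\le k$, \[\lambda^{(1)}_i=\begin{cases} n-k+|\{l: z_i<v_l\}| & \text{if } i\le r,\\ |\{l: y_{k+1-i}>v_l\}| & \text{if } i>r,\end{cases}\qquad \lambda^{(2)}_i=\begin{cases} |\{q: z_i<z_q\}|+|\{t: z_i<y_t\}| & \text{if } i\le r,\\ 0 & \text{if } i>r,\end{cases}\] and if $\lambda^{(1)}_i=n-k$ for some $i$, then $\lambda$ is assigned $\uparrow$ if $w$ is of type I and $\downarrow$ if $w$ is of type II.
   Context: Root system $D_n$: positive roots $e_a\pm e_b$ ($a<b$). $W^{OG(k,2n)}$ is the set of signed permutations $w=(y_1,\dots,y_{k-r},\overline{z_r},\dots,\overline{z_1},v_1,\dots,v_{n-k-1},\widehat{v_{n-k}})$ of $1,\dots,n$ with an even number of barred (negative) entries, $0\le r\le k$, $y_1<\dots<y_{k-r}$, $z_r>\dots>z_1$, $v_1<\dots<v_{n-k}$, $\widehat{v_{n-k}}\in\{v_{n-k},\overline{v_{n-k}}\}$ according to the parity of $r$; $w$ is of type I if $\widehat{v_{n-k}}=v_{n-k}$ and type II otherwise. The entry in position $k+1-i$ is $\overline{z_i}$ if $i\le r$ and $y_{k+1-i}$ if $i>r$. $w$ acts by $e_a\mapsto\pm e_{|w(a)|}$ (minus if barred) and $\mathrm{Inv}(w)$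 is the set of positive roots sent to negative roots. For a set $S$ of positive roots, $\lambda^{(1)}_i$ is the number of roots of $S$ among $e_{k+1-i}\pm e_b$, $b>k$, and $\lambda^{(2)}_i$ the number of roots of $S$ of the form $e_a+e_{k+1-i}$ with $a<k+1-i$. If $\lambda^{(1)}_i=n-k$ for some $i$, $S$ is assigned $\uparrow$ if it contains $e_{k+1-i}-e_n$ and $\downarrow$ if it contains $e_{k+1-i}+e_n$ (for such $i$). *)

(* Defs.v *)
(* Signed permutations of 1..n are encoded as sequences of
   nonzero integers of length n (entry at position a, 1-indexed, is w(a);
   a negative entry is a barred one). *)
From mathcomp Require Import all_boot all_order all_algebra.
Set Implicit Arguments. Unset Strict Implicit. Unset Printing Implicit Defensive.
Import Order.TTheory GRing.Theory Num.Theory.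

Definition went (w : seq int) (a : nat) : int := nth 0%R w a.-1.
Definition wabs (w : seq int) (a : nat) : nat := `|went w a|%N.
Definition wsgn (w : seq int) (a : nat) : int := sgz (went w a).

(* The element w of W^{OG(k,2n)}
     (y_1,..,y_{k-r}, zbar_r, .., zbar_1, v_1, .., v_{n-k-1}, vhat_{n-k})
   where vhat_{n-k} is barred iff r is odd (even number of bars). *)
Definition ogw (r : nat) (y z v : seq nat) : seq int :=
  map Posz y ++ rev (map (fun x : nat => (- (Posz x))%R) z)
  ++ map Posz (take (size v).-1 v)
  ++ [:: if odd r then (- (Posz (last 0%N v)))%R else Posz (last 0%N v)].

Definition typeI (n : nat) (w : seq int) : bool := (0 < went w n)%R.

(* Action of w on roots: e_a |-> wsgn a * e_{wabs a}.
   The positive root e_a + eps e_b (a < b; plus = true means eps = +1,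
   plus = false means eps = -1) is sent to
     wsgn a * e_{wabs a} + eps * wsgn b * e_{wabs b},
   which is a negative root iff its coefficient at the smaller index is negative. *)
Definition sent_negative (w : seq int) (a b : nat) (plus : bool) : bool :=
  if wabs w a < wabs w b then (wsgn w a < 0)%R
  else ((if plus then wsgn w b else - wsgn w b) < 0)%R.

Definition inInv (n : nat) (w : seq int) (a b : nat) (plus : bool) : bool :=
  [&& 1 <= a, a < b, b <= n & sent_negative w a b plus].

Definition lambda1 (n k : nat) (w : seq int) (i : nat) : nat :=
  count (fun b => k < b) [seq b <- iota 1 n | inInv n w (k.+1 - i) b false]
  + count (fun b => k < b) [seq b <- iota 1 n | inInv n w (k.+1 - i) b true].

Definition lambda2 (n k : nat) (w : seq int) (i : nat) : nat :=
  count (fun a => inInv n w a (k.+1 - i) true) (iota 1 n).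

Definition arrow_up (n k : nat) (w : seq int) (i : nat) : bool :=
  inInv n w (k.+1 - i) n false.
Definition arrow_down (n k : nat) (w : seq int) (i : nat) : bool :=
  inInv n w (k.+1 - i) n true.

(* Main.v *)
Require Import Defs.
From mathcomp Require Import all_boot all_order all_algebra zify.
Set Implicit Arguments. Unset Strict Implicit. Unset Printing Implicit Defensive.
Import Order.TTheory GRing.Theory Num.Theory.

Lemma went_y r y z v p : p < size y -> went (ogw r y z v) p.+1 = Posz (nth 0 y p).
Proof.
move=> hp; rewrite /went /ogw /= nth_cat size_map hp.
by rewrite (nth_map 0%N).
Qed.

Lemma went_z r y z v p : p < size z ->
  went (ogw r y z v) (size y + p).+1 = (- Posz (nth 0 z (size z - p.+1)))%R.
Proof.
move=> hp; rewrite /went /ogw /= nth_cat size_map ltnNge leq_addr /= addKn.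
rewrite nth_cat size_rev size_map hp -map_rev (nth_map 0%N) ?size_rev //.
by rewrite nth_rev.
Qed.

Lemma went_v r y z v p : p < size v ->
  went (ogw r y z v) (size y + size z + p).+1 =
  ((if (p == (size v).-1) && odd r then -1 else 1) * Posz (nth 0 v p))%R.
Proof.
move=> hp; rewrite /went /ogw /= nth_cat size_map -addnA ltnNge leq_addr /= addKn.
rewrite nth_cat size_rev size_map ltnNge leq_addr /= addKn.
rewrite nth_cat size_map size_take.
have hv : (size v).-1 < size v by rewrite prednK // (leq_ltn_trans _ hp).
rewrite hv.
case: ltnP => hp2.
  rewrite (nth_map 0%N) ?size_take ?hv // nth_take // ifF ?mul1r //.
  by rewrite (ltn_eqF hp2).
have -> : p = (size v).-1 by apply/eqP; rewrite eqn_leq hp2 -ltnS prednK // (leq_ltn_trans _ hp).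
rewrite subnn /= eqxx nth_last.
by case: (odd r); rewrite ?mulN1r ?mul1r.
Qed.

Lemma count_nth (P : pred nat) s :
  count P s = count (fun l => P (nth 0 s l)) (iota 0 (size s)).
Proof. by rewrite -{1}(mkseq_nth 0 s) /mkseq count_map. Qed.

Lemma snU w a b : wsgn w b != 0%R ->
  sent_negative w a b false || sent_negative w a b true =
  (if wabs w a < wabs w b then (wsgn w a < 0)%R else true).
Proof.
move=> hb; rewrite /sent_negative /=; case: (wabs w a < wabs w b); first by rewrite orbb.
by rewrite oppr_lt0 orbC -neq_lt.
Qed.

Lemma snI w a b :
  sent_negative w a b false && sent_negative w a b true =
  (if wabs w a < wabs w b then (wsgn w a < 0)%R else false).
Proof.
rewrite /sent_negative /=; case: (wabs w a < wabs w b); first by rewrite andbb.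
by rewrite oppr_lt0 lt_asym.
Qed.

Lemma lam1_red n k w i : 1 <= i <= k -> k < n ->
  lambda1 n k w i =
  count (fun l => sent_negative w (k.+1-i) (k+l).+1 false) (iota 0 (n-k)) +
  count (fun l => sent_negative w (k.+1-i) (k+l).+1 true) (iota 0 (n-k)).
Proof.
move=> /andP[hi1 hik] hkn; rewrite /lambda1 !count_filter.
have hI : iota 1 n = iota 1 k ++ iota k.+1 (n-k) by rewrite -iotaD subnKC // ltnW.
have hJ : iota k.+1 (n-k) = map (addn k.+1) (iota 0 (n-k)) by rewrite -iotaDl addn0.
rewrite hI !count_cat hJ !count_map.
have h0 : forall pl, count (predI (fun b => k < b) (fun b => inInv n w (k.+1 - i) b pl)) (iota 1 k) = 0.
  move=> pl; rewrite (eq_in_count (a2 := pred0)) ?count_pred0 //.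
  by move=> b; rewrite mem_iota /= => /andP[_]; rewrite add1n ltnS => hb; rewrite ltnNge hb.
rewrite !h0 !add0n; congr (_ + _); apply: eq_in_count => l; rewrite mem_iota add0n => /andP[_ hl] /=;
  rewrite /inInv addSn ltnS leq_addr /=; have -> : 1 <= k.+1 - i by lia.
all: have -> : k.+1 - i < (k + l).+1 by lia.
all: by have -> : k + l < n by lia.
Qed.

Lemma lam2_red n k w i : 1 <= i <= k -> k < n ->
  lambda2 n k w i =
  count (fun a => sent_negative w a (k.+1-i) true) (iota 1 (k-i)).
Proof.
move=> /andP[hi1 hik] hkn; rewrite /lambda2.
have hI : iota 1 n = iota 1 (k-i) ++ iota (k-i).+1 (n-(k-i)) by rewrite -iotaD subnKC // ; lia.
rewrite hI count_cat.
rewrite [count _ (iota (k-i).+1 _)](eq_in_count (a2 := pred0)) ?count_pred0 ?addn0.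
  apply: eq_in_count => a; rewrite mem_iota => /andP[ha1 ha2]; rewrite /inInv ha1 /=.
  have -> : a < k.+1 - i by lia.
  by have -> : k.+1 - i <= n by lia.
move=> a; rewrite mem_iota /inInv => /andP[ha1 ha2] /=.
have -> : (a < k.+1 - i) = false by lia.
by rewrite andbF.
Qed.

Lemma count_sorted z j : sorted ltn z -> j < size z ->
  count (fun x => nth 0 z j < x) z = size z - j.+1.
Proof.
move=> hs hj; rewrite count_nth.
rewrite (eq_in_count (a2 := fun l => j < l)); last first.
  move=> l; rewrite mem_iota add0n /= => hl.
  case: (ltngtP j l) => hjl.
  - by apply: (sorted_ltn_nth ltn_trans) => //.
  - by apply/negbTE; rewrite -leqNgt ltnW // (sorted_ltn_nth ltn_trans).
  - by rewrite hjl ltnn.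
have hI : iota 0 (size z) = iota 0 j.+1 ++ iota j.+1 (size z - j.+1) by rewrite -iotaD subnKC.
rewrite hI count_cat (eq_in_count (a1 := fun l => j < l) (a2 := pred0)).
  rewrite count_pred0 (eq_in_count (a2 := predT)) ?count_predT ?size_iota //.
  by move=> l; rewrite mem_iota; case/andP.
by move=> l; rewrite mem_iota add0n /= ltnS => hl; rewrite ltnNge hl.
Qed.

Lemma wabs_pos w p x : went w p = Posz x -> wabs w p = x.
Proof. by rewrite /wabs => ->. Qed.
Lemma wabs_neg w p x : went w p = (- Posz x)%R -> wabs w p = x.
Proof. by rewrite /wabs => ->; rewrite abszN. Qed.
Lemma wsgn_pos w p x : went w p = Posz x -> (wsgn w p < 0)%R = false.
Proof. by rewrite /wsgn sgz_lt0 => ->. Qed.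
Lemma wsgn_neg w p x : 0 < x -> went w p = (- Posz x)%R -> (wsgn w p < 0)%R = true.
Proof. by move=> hx; rewrite /wsgn sgz_lt0 => ->; rewrite oppr_lt0 ltz_nat. Qed.
Lemma wsgn_v w p x (b : bool) : 0 < x ->
  went w p = ((if b then -1 else 1) * Posz x)%R -> wabs w p = x /\ wsgn w p != 0%R.
Proof.
move=> hx; rewrite /wabs /wsgn => ->.
have hx' : Posz x != 0%R by rewrite eqz_nat -lt0n.
case: b; rewrite ?mulN1r ?mul1r ?abszN; split => //.
  by rewrite (ltr0_sgz (x := (- Posz x)%R)) // oppr_lt0 ltz_nat.
by rewrite (gtr0_sgz (x := Posz x)) // ltz_nat.
Qed.

Ltac ar := repeat match goal with H : ?T |- _ =>
  lazymatch T with
  | is_true (leq _ _) => fail | nat => fail | @eq nat _ _ => fail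
  | _ => clear H end end; lia.

Theorem lemma3p14 (n k r : nat) (y z v : seq nat) :
  1 <= k -> k < n -> r <= k ->
  size y = k - r -> size z = r -> size v = n - k ->
  sorted ltn y -> sorted ltn z -> sorted ltn v ->
  perm_eq (y ++ z ++ v) (iota 1 n) ->
  let w := ogw r y z v in
  forall i : nat, 1 <= i <= k ->
    lambda1 n k w i =
      (if i <= r then n - k + count (fun x => nth 0 z i.-1 < x) v
       else count (fun x => x < nth 0 y (k - i)) v)
    /\ lambda2 n k w i =
      (if i <= r then count (fun x => nth 0 z i.-1 < x) z
                      + count (fun x => nth 0 z i.-1 < x) y
       else 0)
    /\ (lambda1 n k w i = n - k ->
        if typeI n w then arrow_up n k w i && ~~ arrow_down n k w i
        else arrow_down n k w i && ~~ arrow_up n k w i).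
Proof.
move=> hk1 hkn hrk hy hz hv sy sz sv hp w i hi.
have /andP[hi1 hik] := hi.
have hu : uniq (y ++ z ++ v) by rewrite (perm_uniq hp) iota_uniq.
have hpos : forall x, x \in y ++ z ++ v -> 0 < x.
  by move=> x; rewrite (perm_mem hp) mem_iota => /andP[].
move: (hu); rewrite cat_uniq => /and3P[_ hny]; rewrite cat_uniq => /and3P[_ hnz _].
have dyz : forall x, x \in y -> x \in z -> False.
  by move=> x hxy hxz; move/hasP: hny; apply; exists x => //; rewrite mem_cat hxz.
have dyv : forall x, x \in y -> x \in v -> False.
  by move=> x hxy hxv; move/hasP: hny; apply; exists x => //; rewrite mem_cat hxv orbT.
have dzv : forall x, x \in z -> x \in v -> False.
  by move=> x hxz hxv; move/hasP: hnz; apply; exists x.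
have hkyz : k = size y + size z by rewrite hy hz subnK.
have FV : forall l, l < n - k -> wabs w (k + l).+1 = nth 0 v l /\ wsgn w (k + l).+1 != 0%R.
  move=> l hl; apply: (wsgn_v (b := (l == (size v).-1) && odd r)).
    by apply: hpos; rewrite !mem_cat mem_nth ?orbT // hv.
  by rewrite hkyz went_v // hv.
set A := wabs w (k.+1 - i).
set sa := (wsgn w (k.+1 - i) < 0)%R.
have L1 : lambda1 n k w i =
   count (fun x => if A < x then sa else true) v + count (fun x => if A < x then sa else false) v.
  rewrite lam1_red // -count_predUI (count_nth (fun x => if A < x then sa else true))
     (count_nth (fun x => if A < x then sa else false)) hv.
  congr (_ + _); apply: eq_in_count => l; rewrite mem_iota add0n => /andP[_ hl];
    have [h1 h2] := FV l hl; rewrite /= -h1.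
    by rewrite snU.
  by rewrite snI.
set V := nth 0 v (n - k).-1.
have hVpos : 0 < V by apply: hpos; rewrite !mem_cat mem_nth ?orbT // hv; ar.
have hwn : went w n = ((if odd r then -1 else 1) * Posz V)%R.
  have e : n = (size y + size z + (size v).-1).+1 by rewrite -hkyz hv; ar.
  rewrite {1}e went_v ?eqxx /= ?hv /V //; ar.
have hwabsn : wabs w n = V.
  by rewrite /wabs hwn; case: (odd r); rewrite ?mulN1r ?mul1r ?abszN.
have hsgn : wsgn w n = if odd r then (-1)%R else 1%R.
  rewrite /wsgn hwn; case: (odd r); rewrite ?mulN1r ?mul1r.
    by rewrite ltr0_sgz // oppr_lt0 ltz_nat.
  by rewrite gtr0_sgz // ltz_nat.
have htI : typeI n w = ~~ odd r.
  by rewrite /typeI hwn; case: (odd r); rewrite ?mulN1r ?mul1r /=; ar.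
have ARR : ~~ (A < V) ->
    if typeI n w then arrow_up n k w i && ~~ arrow_down n k w i
    else arrow_down n k w i && ~~ arrow_up n k w i.
  move=> hAV; rewrite htI /arrow_up /arrow_down /inInv /sent_negative.
  have -> : 1 <= k.+1 - i by ar.
  have -> : k.+1 - i < n by ar.
  rewrite leqnn hwabsn (negbTE hAV) hsgn /=.
  by case: (odd r).
case: (leqP i r) => hir.
-
  set Z := nth 0 z i.-1.
  have hZpos : 0 < Z by apply: hpos; rewrite !mem_cat mem_nth ?orbT // hz; ar.
  have hZz : Z \in z by rewrite mem_nth // hz; ar.
  have hwa : went w (k.+1 - i) = (- Posz Z)%R.
    have -> : k.+1 - i = (size y + (r - i)).+1 by rewrite hy; ar.
    rewrite went_z ?hz; last ar.
    by have -> : r - (r - i).+1 = i.-1 by ar.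
  have hA : A = Z by apply: wabs_neg hwa.
  have hsa : sa = true by apply: (wsgn_neg hZpos hwa).
  have e1 : lambda1 n k w i = n - k + count (fun x => Z < x) v.
    rewrite L1 hA hsa -hv; congr (_ + _).
      by rewrite (eq_count (a2 := predT)) ?count_predT // => x; case: ifP.
    by apply: eq_count => x; case: ifP.
  split; [exact: e1 | split; last first].
    move=> h; apply: ARR; rewrite hA.
    have : count (fun x => Z < x) v = 0 by move: h; rewrite e1; ar.
    move/eqP; rewrite -leqn0 leqNgt -has_count => /hasPn; apply.
    by rewrite /V mem_nth // hv; ar.
  rewrite lam2_red //.
  have -> : k - i = (k - r) + (r - i) by ar.
  rewrite iotaD count_cat add1n [RHS]addnC; congr (_ + _).
    rewrite -hy (count_nth (fun x => Z < x) y).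
    have -> : iota 1 (size y) = map (addn 1) (iota 0 (size y)) by rewrite -iotaDl.
    rewrite count_map; apply: eq_in_count => t; rewrite mem_iota add0n => /andP[_ ht] /=.
    have hwt : went w (1 + t) = Posz (nth 0 y t) by rewrite add1n went_y.
    rewrite /sent_negative (wabs_pos hwt) -/A hA (wsgn_pos hwt) /=.
    rewrite -/sa hsa.
    case: ltngtP => //= hh; exfalso; apply: (dyz (nth 0 y t)).
      by rewrite mem_nth.
    by rewrite hh.
  rewrite (eq_in_count (a2 := predT)) ?count_predT ?size_iota.
    by rewrite count_sorted // hz; ar.
  move=> j; rewrite mem_iota => /andP[hj1 hj2] /=.
  have hj : j = (k - r).+1 + (j - (k - r).+1) by ar.
  set q := j - (k - r).+1 in hj.
  have hwj : went w j = (- Posz (nth 0 z (size z - q.+1)))%R.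
    by rewrite hj -hy addSn went_z // hz; ar.
  have hqpos : 0 < nth 0 z (size z - q.+1).
    by apply: hpos; rewrite !mem_cat mem_nth ?orbT // hz; ar.
  rewrite /sent_negative (wsgn_neg hqpos hwj) /=.
  by case: ifP.
-
  set Y := nth 0 y (k - i).
  have hYy : Y \in y by rewrite mem_nth // hy; ar.
  have hwa : went w (k.+1 - i) = Posz Y.
    have -> : k.+1 - i = (k - i).+1 by ar.
    by rewrite went_y // hy; ar.
  have hA : A = Y by apply: wabs_pos hwa.
  have hsa : sa = false by apply: (wsgn_pos hwa).
  have e1 : lambda1 n k w i = count (fun x => x < Y) v.
    rewrite L1 hA hsa.
    rewrite [count (fun x => if _ then _ else false) v](eq_count (a2 := pred0)) ?count_pred0 ?addn0;
      last by move=> x; case: ifP.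
    apply: eq_in_count => x hx /=.
    case: ltngtP => //= hh; last by exfalso; apply: (dyv Y hYy); rewrite hh.
  split; [exact: e1 | split; last first].
    move=> h; apply: ARR; rewrite hA.
    have : all (fun x => x < Y) v by rewrite all_count -e1 h hv.
    move/allP => /(_ V); rewrite -leqNgt => hh; apply: ltnW; apply: hh.
    by rewrite /V mem_nth // hv; ar.
  rewrite lam2_red // (eq_in_count (a2 := pred0)) ?count_pred0 //.
  move=> a; rewrite mem_iota => /andP[ha1 ha2] /=.
  have ha : a = (a.-1).+1 by ar.
  have hwt : went w a = Posz (nth 0 y a.-1) by rewrite ha went_y // hy; ar.
  rewrite /sent_negative (wsgn_pos hwt) /=.
  rewrite -/sa hsa.
  by case: ifP.
Qed.
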